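(* Let $\kappa=\dim_{\mathbb R}\mathbb K$. For all $X,Y,Z,T\in\mathfrak h_3\mathbb K$, with $L^\bullet_X:\mathfrak h_3\mathbb K\to\mathfrak h_3\mathbb K$, $L^\bullet_XY=X\bullet Y$ and real traces on $\mathfrak h_3\mathbb K$: $$\mathrm{tr}(L^\bullet_XL^\bullet_Y)=\frac{\kappa+2}{4}\langle X,Y\rangle,$$ $$\mathrm{tr}(L^\bullet_XL^\bullet_YL^\bullet_ZL^\bullet_T)=\frac{\kappa+2}{32}\big(\langle X,Y\rangle\langle Z,T\rangle+\langle X,T\rangle\langle Z,Y\rangle\big)-\frac{\kappa}{8}\langle Y\bullet T,X\bullet Z\rangle.$$
   Context: $\mathbb K\in\{\mathbb R,\mathbb C,\mathbb H,\mathbb O\}$; $\mathfrak h_3\mathbb K$ the $3\times3$ hermitian matrices over $\mathbb K$ with $X\circ Y=\frac12(XY+YX)$, trace $\mathrm{tr}$, $\langle X,Y\rangle=\mathrm{tr}(X\circ Y)$, $X^2=X\circ X$, $X^3=X\circ X^2$. Define $\det X=\frac13\mathrm{tr}X^3-\frac12\mathrm{tr}X^2\,\mathrm{tr}X+\frac16(\mathrm{tr}X)^3$, let $N$ be the unique symmetric trilinear form with $N(X,X,X)=\det X$, and define the (symmetric) Freudenthal product $\bullet$ by $\langle X\bullet Y,Z\rangle=3N(X,Y,Z)$ for all $Z$. *)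

(* Defs.v *)
(* The Albert-type algebras h_3 K for K = R, C, H, O, with K
   obtained as the Cayley-Dickson algebra of level k = 0,1,2,3 (dim 2^k). *)
From HB Require Import structures.
From mathcomp Require Import all_boot all_order all_algebra.
From Stdlib Require Import ClassicalEpsilon.
Set Implicit Arguments. Unset Strict Implicit. Unset Printing Implicit Defensive.
Import Order.TTheory GRing.Theory Num.Theory.
Local Open Scope ring_scope.

Section Albert.
Variable R : fieldType.

(* An element of the Cayley-Dickson algebra of level k: coordinates
   x 0, ..., x (2^k - 1) (coordinates beyond are ignored). *)
Definition Kt := nat -> R.

Definition kconj (k : nat) (x : Kt) : Kt :=
  fun i => if i == 0%N then x 0%N else if (i < 2 ^ k)%N then - x i else 0.

Definition klo (h : nat) (x : Kt) : Kt := fun i => if (i < h)%N then x i else 0.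
Definition khi (h : nat) (x : Kt) : Kt := fun i => if (i < h)%N then x (i + h)%N else 0.

(* Cayley-Dickson product (a,b)(c,d) = (ac - d b^*, a^* d + c b). *)
Fixpoint kmul (k : nat) (x y : Kt) : Kt :=
  match k with
  | 0 => fun i => if i == 0%N then x 0%N * y 0%N else 0
  | k'.+1 => fun i =>
      let h := (2 ^ k')%N in
      if (i < h)%N then
        kmul k' (klo h x) (klo h y) i - kmul k' (khi h y) (kconj k' (khi h x)) i
      else if (i < (2 * h)%N)%N then
        kmul k' (kconj k' (klo h x)) (khi h y) (i - h)%N + kmul k' (klo h y) (khi h x) (i - h)%N
      else 0
  end.

Definition M3 := 'I_3 -> 'I_3 -> Kt.
Definition mmul k (A B : M3) : M3 :=
  fun i j t => \sum_(l < 3) kmul k (A i l) (B l j) t.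
Definition jmul k (A B : M3) : M3 :=
  fun i j t => (mmul k A B i j t + mmul k B A i j t) / 2%:R.
Definition mtr (A : M3) : R := \sum_(i < 3) A i i 0%N.

(* h_3 K is represented by real coordinate vectors of dimension 3 + 3*2^k:
   coordinates 0,1,2 are the (real) diagonal entries; coordinates
   3 + p*2^k + t (t < 2^k) are the K-coordinates of the upper off-diagonal
   entry number p, where p = 0,1,2 stands for entries (0,1),(0,2),(1,2).
   The lower entries are the conjugates (hermitian matrices). *)
Definition hdim (k : nat) : nat := (3 + 3 * 2 ^ k)%N.
Definition hK (k : nat) := 'rV[R]_(hdim k).

Definition vget k (v : hK k) (n : nat) : R :=
  match (insub n : option 'I_(hdim k)) with Some j => v 0 j | None => 0 end.

Definition offpos (i j : 'I_3) : nat := ((i : nat) + j).-1.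

Definition toM k (v : hK k) : M3 := fun i j =>
  let off (p : nat) : Kt :=
    fun t => if (t < 2 ^ k)%N then vget v (3 + p * 2 ^ k + t)%N else 0 in
  if i == j then (fun t => if t == 0%N then vget v i else 0)
  else if (i < j)%N then off (offpos i j) else kconj k (off (offpos j i)).

Definition prow (p : nat) : 'I_3 := inord (if p == 2%N then 1%N else 0%N).
Definition pcol (p : nat) : 'I_3 := inord (if p == 0%N then 1%N else 2%N).

Definition fromM k (A : M3) : hK k := \row_(n < hdim k)
  if (n < 3)%N then A (inord n) (inord n) 0%N
  else A (prow ((n - 3) %/ 2 ^ k)%N) (pcol ((n - 3) %/ 2 ^ k)%N) ((n - 3) %% 2 ^ k)%N.

Definition jprod k (X Y : hK k) : hK k := fromM k (jmul k (toM X) (toM Y)).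
Definition htr k (X : hK k) : R := mtr (toM X).
Definition hinner k (X Y : hK k) : R := htr (jprod X Y).

Definition hdet k (X : hK k) : R :=
  let X2 := jprod X X in let X3 := jprod X X2 in
  htr X3 / 3%:R - htr X2 * htr X / 2%:R + htr X ^+ 3 / 6%:R.

(* the unique symmetric trilinear form N with N(X,X,X) = det X (polarization) *)
Definition hN k (X Y Z : hK k) : R :=
  (hdet (X + Y + Z) - hdet (X + Y) - hdet (X + Z) - hdet (Y + Z)
   + hdet X + hdet Y + hdet Z) / 6%:R.

Definition bullet k (X Y : hK k) : hK k :=
  epsilon (inhabits 0) (fun W => forall Z : hK k, hinner W Z = 3%:R * hN X Y Z).

End Albert.

(* Main.v *)
Require Import Defs.
From Stdlib Require Import QArith Qreduction Ring_polynom BinList Ring Field Lia ZArith.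
From Stdlib Require Import ClassicalEpsilon FunctionalExtensionality.
From HB Require Import structures.
From mathcomp Require Import all_boot all_order all_algebra.
Import Order.TTheory GRing.Theory Num.Theory.
Set Implicit Arguments. Unset Strict Implicit. Unset Printing Implicit Defensive.
Close Scope Q_scope.
Open Scope nat_scope.

Definition q0 : Q := Qmake 0 1.
Definition q1 : Q := Qmake 1 1.
Definition qadd (a b : Q) : Q := Qred (Qplus a b).
Definition qmul (a b : Q) : Q := Qred (Qmult a b).
Definition qsub (a b : Q) : Q := Qred (Qminus a b).
Definition qopp (a : Q) : Q := Qopp a.
Definition Pl := Pol Q.
Definition sP0 : Pl := Pc q0.
Definition sP1 : Pl := Pc q1.
Definition sPa (p q : Pl) : Pl := Padd q0 qadd Qeq_bool p q.
Definition sPm (p q : Pl) : Pl := Pmul q0 q1 qadd qmul Qeq_bool p q.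
Definition sPs (p q : Pl) : Pl := Psub q0 qadd qsub qopp Qeq_bool p q.
Definition sPo (p : Pl) : Pl := Popp qopp p.
Definition qf (a b : nat) : Q := Qmake (Z.of_nat a) (Pos.of_nat b).
Definition sPc (a b : nat) : Pl := Pc (qf a b).

Definition memoT (n : nat) (f : nat -> Pl) : nat -> Pl :=
  let l := map f (iota 0 n) in fun i => if i < n then nth sP0 l i else f i.
Definition sK := nat -> Pl.
Definition kconj_s k (x : sK) : sK :=
  fun i => if i == 0 then x 0 else if i < 2 ^ k then sPo (x i) else sP0.
Definition klo_s h (x : sK) : sK := fun i => if i < h then x i else sP0.
Definition khi_s h (x : sK) : sK := fun i => if i < h then x (i + h) else sP0.
Fixpoint kmul_s k (x y : sK) : sK :=
  match k with
  | 0 => fun i => if i == 0 then sPm (x 0) (y 0) else sP0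
  | k'.+1 =>
     let a := kmul_s k' (klo_s (2 ^ k') x) (klo_s (2 ^ k') y) in
     let b := kmul_s k' (khi_s (2 ^ k') y) (kconj_s k' (khi_s (2 ^ k') x)) in
     let c := kmul_s k' (kconj_s k' (klo_s (2 ^ k') x)) (khi_s (2 ^ k') y) in
     let d := kmul_s k' (klo_s (2 ^ k') y) (khi_s (2 ^ k') x) in
     memoT (2 * 2 ^ k') (fun i => if i < 2 ^ k' then sPs (a i) (b i)
        else if i < 2 * 2 ^ k' then sPa (c (i - 2 ^ k')) (d (i - 2 ^ k')) else sP0)
  end.
Definition M3s := nat -> nat -> sK.
Definition memo3 (A : M3s) : M3s :=
  let l := map (fun i => map (fun j => A i j) (iota 0 3)) (iota 0 3) in
  fun i j => if (i < 3) && (j < 3) then nth (fun _ => sP0) (nth [::] l i) j else A i j.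
Definition mmul_s k (A B : M3s) : M3s := memo3 (fun i j =>
  let p0 := kmul_s k (A i 0) (B 0 j) in
  let p1 := kmul_s k (A i 1) (B 1 j) in
  let p2 := kmul_s k (A i 2) (B 2 j) in
  memoT (2 ^ k) (fun t => sPa (sPa (sPa sP0 (p0 t)) (p1 t)) (p2 t))).
Definition shalf : Pl := sPc 1 2.
Definition jmul_s k (A B : M3s) : M3s :=
  let P := mmul_s k A B in let Q := mmul_s k B A in
  memo3 (fun i j => memoT (2 ^ k) (fun t => sPm (sPa (P i j t) (Q i j t)) shalf)).
Definition mtr_s (A : M3s) : Pl := sPa (sPa (sPa sP0 (A 0 0 0)) (A 1 1 0)) (A 2 2 0).
Definition sV := nat -> Pl.
Definition vg_s k (s : sV) n := if n < hdim k then s n else sP0.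
Definition off_s k (s : sV) p : sK :=
  fun t => if t < 2 ^ k then vg_s k s (3 + p * 2 ^ k + t) else sP0.
Definition toM_s k (s : sV) : M3s :=
  memo3 (fun i j => if i == j then (fun t => if t == 0 then vg_s k s i else sP0)
    else if i < j then off_s k s (i + j).-1 else kconj_s k (off_s k s (j + i).-1)).
Definition prow_n (p : nat) : nat := if p == 2 then 1 else 0.
Definition pcol_n (p : nat) : nat := if p == 0 then 1 else 2.
Definition fromM_s k (A : M3s) : sV := memoT (hdim k) (fun n =>
  if n < 3 then A n n 0 else
  A (prow_n ((n - 3) %/ 2 ^ k)) (pcol_n ((n - 3) %/ 2 ^ k)) ((n - 3) %% 2 ^ k)).
Definition jprod_s k (X Y : sV) : sV := fromM_s k (jmul_s k (toM_s k X) (toM_s k Y)).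
Definition htr_s k (X : sV) : Pl := mtr_s (toM_s k X).
Definition hinner_s k (X Y : sV) : Pl := htr_s k (jprod_s k X Y).
Definition vadd (X Y : sV) : sV := fun n => sPa (X n) (Y n).
Definition vsub (X Y : sV) : sV := fun n => sPs (X n) (Y n).
Definition vscal (c : Pl) (X : sV) : sV := fun n => sPm c (X n).
Definition Ivec : sV := fun n => if n < 3 then sP1 else sP0.
Definition bform_s k (X Y : sV) : sV :=
  let tx := htr_s k X in let ty := htr_s k Y in
  memoT (hdim k) (vadd (vsub (vsub (jprod_s k X Y) (vscal (sPm tx shalf) Y)) (vscal (sPm ty shalf) X))
    (vscal (sPm (sPs (sPm tx ty) (hinner_s k X Y)) shalf) Ivec)).
Definition hdet_s k (X : sV) : Pl :=
  let X2 := jprod_s k X X in let X3 := jprod_s k X X2 in let t := htr_s k X in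
  sPa (sPs (sPm (htr_s k X3) (sPc 1 3)) (sPm (sPm (htr_s k X2) t) shalf))
      (sPm (sPm t (sPm t t)) (sPc 1 6)).
Definition hN_s k (X Y Z : sV) : Pl :=
  sPm (sPa (sPa (sPa (sPs (sPs (sPs (hdet_s k (vadd (vadd X Y) Z)) (hdet_s k (vadd X Y)))
        (hdet_s k (vadd X Z))) (hdet_s k (vadd Y Z))) (hdet_s k X)) (hdet_s k Y)) (hdet_s k Z))
   (sPc 1 6).
Definition varv (off : nat) : sV := fun n => mk_X q0 q1 (Pos.of_succ_nat (off + n)).
Definition evec (a : nat) : sV := fun n => if n == a then sP1 else sP0.
Fixpoint sumP (n : nat) (f : nat -> Pl) : Pl :=
  match n with 0 => sP0 | n'.+1 => sPa (sumP n' f) (f n') end.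
Definition cq (j : nat) : nat := if j < 3 then 1 else 2.

Definition check_spec k : bool :=
  let n := hdim k in
  Peq Qeq_bool (hinner_s k (bform_s k (varv 0) (varv n)) (varv (2 * n)))
               (sPm (sPc 3 1) (hN_s k (varv 0) (varv n) (varv (2 * n)))) &&
  all (fun j => Peq Qeq_bool (hinner_s k (varv 0) (evec j)) (sPm (sPc (cq j) 1) (varv 0 j)))
    (iota 0 n).
Definition lhs1 k : Pl :=
  let n := hdim k in sumP n (fun a => bform_s k (varv 0) (bform_s k (varv n) (evec a)) a).
Definition rhs1 k : Pl :=
  let n := hdim k in sPm (sPc (2 ^ k + 2) 4) (hinner_s k (varv 0) (varv n)).
Definition lhs2 k : Pl :=
  let n := hdim k in
  sumP n (fun a => bform_s k (varv 0) (bform_s k (varv n)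
     (bform_s k (varv (2 * n)) (bform_s k (varv (3 * n)) (evec a)))) a).
Definition rhs2 k : Pl :=
  let n := hdim k in
  let X := varv 0 in let Y := varv n in let Z := varv (2 * n) in let T := varv (3 * n) in
  sPs (sPm (sPc (2 ^ k + 2) 32)
         (sPa (sPm (hinner_s k X Y) (hinner_s k Z T)) (sPm (hinner_s k X T) (hinner_s k Z Y))))
     (sPm (sPc (2 ^ k) 8) (hinner_s k (bform_s k Y T) (bform_s k X Z))).
Definition check_all k : bool :=
  check_spec k && Peq Qeq_bool (lhs1 k) (rhs1 k).

Local Open Scope ring_scope.
Section Eval.
Variable R : realFieldType.

Lemma Rth : ring_theory (0:R) 1 +%R *%R (fun x y => x - y) -%R eq.
Proof. split. exact: add0r. exact: addrC. exact: addrA. exact: mul1r. exact: mulrC. exact: mulrA. exact: mulrDl. by []. exact: subrr. Qed.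
Add Ring Rring : Rth.
Lemma Rth2 : @ring_theory (Algebra.BaseAddMagma.sort R) 0 1 +%R *%R (fun x y => x - y) -%R eq.
Proof. exact: Rth. Qed.
Add Ring Rring2 : Rth2.

Lemma Fth : field_theory (0:R) 1 +%R *%R (fun x y => x - y) -%R (fun x y => x / y) GRing.inv eq.
Proof. split=> //; first exact: Rth. by move/eqP; rewrite oner_eq0. by move=> x /eqP h; rewrite mulVf. Qed.
Add Field Rfield : Fth.
Lemma Fth2 : @field_theory (GRing.PzSemiRing.sort R) 0 1 +%R *%R (fun x y => x - y) -%R (fun x y => x / y) GRing.inv eq.
Proof. exact: Fth. Qed.
Add Field Rfield2 : Fth2.

Definition IZ (z : Z) : R :=
  match z with Z0 => 0 | Zpos p => (Pos.to_nat p)%:R | Zneg p => - (Pos.to_nat p)%:R end.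

Lemma IZ_nat z : IZ z = (Z.to_nat z)%:R - (Z.to_nat (- z))%:R.
Proof. by case: z => [|p|p] /=; rewrite ?subr0 ?sub0r ?subrr. Qed.

Lemma aux_add (x1 y1 a b c d : R) : x1 + c + d = y1 + a + b -> x1 - y1 = a - c + (b - d).
Proof. move=> H; have -> : x1 = y1 + a + b - c - d by rewrite -H; ring. ring. Qed.
Lemma aux_fadd (n1 n2 d1 d2 : R) : d1 != 0 -> d2 != 0 ->
  (n1 * d2 + n2 * d1) / (d1 * d2) = n1 / d1 + n2 / d2.
Proof. move=> /eqP h1 /eqP h2; field; by split. Qed.
Lemma aux_fmul (n1 n2 d1 d2 : R) : d1 != 0 -> d2 != 0 ->
  (n1 * n2) / (d1 * d2) = n1 / d1 * (n2 / d2).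
Proof. move=> /eqP h1 /eqP h2; field; by split. Qed.
Lemma aux_feq (n1 n2 d1 d2 : R) : d1 != 0 -> d2 != 0 -> n1 * d2 = n2 * d1 ->
  n1 / d1 = n2 / d2.
Proof. move=> /eqP h1 /eqP h2 H. have -> : n1 = n2 * d1 / d2 by rewrite -H; field. field; by split. Qed.

Lemma IZ_add a b : IZ (a + b) = IZ a + IZ b.
Proof.
rewrite !IZ_nat.
have H : (Z.to_nat (a + b) + Z.to_nat (- a) + Z.to_nat (- b)
          = Z.to_nat (- (a + b)) + Z.to_nat a + Z.to_nat b)%N.
  rewrite -!plusE; lia.
have H' := congr1 (fun m : nat => m%:R : R) H; rewrite /= !natrD in H'.
exact: aux_add.
Qed.

Lemma IZ_mul a b : IZ (a * b) = IZ a * IZ b.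
Proof.
case: a => [|p|p]; case: b => [|q|q] /=; rewrite ?mul0r ?mulr0 // Pos2Nat.inj_mul natrM;
  by rewrite ?mulrN ?mulNr ?opprK.
Qed.

Lemma IZ_opp a : IZ (- a) = - IZ a.
Proof. by case: a => [|p|p] /=; rewrite ?oppr0 ?opprK. Qed.

Lemma IZ_pos_neq0 p : IZ (Zpos p) != 0.
Proof. rewrite /= pnatr_eq0; apply/eqP; have := Pos2Nat.is_pos p; lia. Qed.

Lemma IZ_of_nat m : IZ (Z.of_nat m) = m%:R.
Proof. by case: m => [|m] //=; rewrite SuccNat2Pos.id_succ. Qed.

Definition phi (q : Q) : R := IZ (Qnum q) / IZ (Zpos (Qden q)).

Lemma phi_eq x y : Qeq x y -> phi x = phi y.
Proof.
rewrite /Qeq /phi => H.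
have H' := congr1 IZ H; rewrite !IZ_mul in H'.
apply: aux_feq => //; exact: IZ_pos_neq0.
Qed.

Lemma phi_red q : phi (Qred q) = phi q.
Proof. apply: phi_eq; exact: Qred_correct. Qed.

Lemma IZ_den_mul p q : IZ (Zpos (p * q)) = IZ (Zpos p) * IZ (Zpos q).
Proof. by rewrite -IZ_mul. Qed.

Lemma phi_add x y : phi (Qplus x y) = phi x + phi y.
Proof.
rewrite /phi /Qplus; cbn [Qnum Qden]; rewrite IZ_add !IZ_mul IZ_den_mul.
apply: aux_fadd; exact: IZ_pos_neq0.
Qed.

Lemma phi_mul x y : phi (Qmult x y) = phi x * phi y.
Proof.
rewrite /phi /Qmult; cbn [Qnum Qden]; rewrite IZ_mul IZ_den_mul.
apply: aux_fmul; exact: IZ_pos_neq0.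
Qed.

Lemma phi_opp x : phi (Qopp x) = - phi x.
Proof. by rewrite /phi /Qopp; cbn [Qnum Qden]; rewrite IZ_opp mulNr. Qed.

Lemma phi_qf a b : (0 < b)%N -> phi (qf a b) = a%:R / b%:R.
Proof.
move=> hb; rewrite /phi /qf /= IZ_of_nat Nat2Pos.id //.
by move=> h; rewrite h in hb.
Qed.

Lemma CRmorph : ring_morph (0:R) 1 +%R *%R (fun x y => x - y) -%R eq
   q0 q1 qadd qmul qsub qopp Qeq_bool phi.
Proof.
split.
- by rewrite /phi /= mul0r.
- by rewrite /phi /= divr1.
- by move=> x y; rewrite /qadd phi_red phi_add.
- by move=> x y; rewrite /qsub phi_red /Qminus phi_add phi_opp.
- by move=> x y; rewrite /qmul phi_red phi_mul.
- by move=> x; rewrite /qopp phi_opp.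
- by move=> x y /Qeq_bool_eq; apply: phi_eq.
Qed.

Lemma Reqe : ring_eq_ext +%R *%R -%R (@eq R).
Proof. by split; move=> ? ? -> //; move=> ? ? ->. Qed.

Definition ARth := Rth_ARth (Eqsth R) Reqe Rth.

Definition ev (l : seq R) (p : Pl) : R := Pphi 0 +%R *%R phi l p.

Lemma evA l p q : ev l (sPa p q) = ev l p + ev l q.
Proof. exact: (Padd_ok (Eqsth R) Reqe ARth CRmorph). Qed.
Lemma evM l p q : ev l (sPm p q) = ev l p * ev l q.
Proof. exact: (Pmul_ok (Eqsth R) Reqe ARth CRmorph). Qed.
Lemma evS l p q : ev l (sPs p q) = ev l p - ev l q.
Proof. exact: (Psub_ok (Eqsth R) Reqe ARth CRmorph). Qed.
Lemma evO l p : ev l (sPo p) = - ev l p.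
Proof. exact: (Popp_ok (Eqsth R) Reqe ARth CRmorph). Qed.
Lemma ev0 l : ev l sP0 = 0.
Proof. by rewrite /ev /= /phi /= mul0r. Qed.
Lemma ev1 l : ev l sP1 = 1.
Proof. by rewrite /ev /= /phi /= divr1. Qed.
Lemma evC l a b : (0 < b)%N -> ev l (sPc a b) = a%:R / b%:R.
Proof. exact: phi_qf. Qed.
Lemma evPeq l p q : Peq Qeq_bool p q = true -> ev l p = ev l q.
Proof. move=> h; exact: (Peq_ok (Eqsth R) Reqe CRmorph _ _ h l). Qed.

Lemma bnth_succ (q : positive) (L : list R) : BinList.nth 0 (Pos.succ q) L = BinList.nth 0 q (tl L).
Proof.
elim: q L => [q IH|q IH|] L //=.
by rewrite IH jump_succ /= -!jump_tl.
Qed.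

Lemma bnth_nat (m : nat) (L : list R) : BinList.nth 0 (Pos.of_succ_nat m) L = nth 0 L m.
Proof.
elim: m L => [|m IH] L; first by case: L.
have -> : Pos.of_succ_nat m.+1 = Pos.succ (Pos.of_succ_nat m) by [].
by rewrite bnth_succ IH; case: L => [|a L] //=; rewrite !nth_nil.
Qed.

Lemma ev_var l off n : ev l (varv off n) = nth 0 l (off + n).
Proof.
rewrite /ev /varv -(mkX_ok (Eqsth R) Reqe ARth CRmorph).
exact: bnth_nat.
Qed.


End Eval.

Section Model.
Variable R : realFieldType.
Notation ev := (@ev R).
Lemma memoT_id n f i : memoT n f i = f i.
Proof.
rewrite /memoT; case: ifP => // h.
by rewrite (nth_map 0%N) ?size_iota // nth_iota.
Qed.

Lemma memo3_id (A : M3s) i j : memo3 A i j = A i j.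
Proof.
rewrite /memo3; case: ifP => // /andP [hi hj].
rewrite (nth_map 0%N) ?size_iota // nth_iota // (nth_map 0%N) ?size_iota // nth_iota //.
Qed.

Opaque memoT memo3.
Variable l : seq R.
Definition evK (x : sK) : Kt R := fun i => ev l (x i).

Lemma evK_kconj k x : evK (kconj_s k x) = kconj k (evK x).
Proof.
apply: functional_extensionality => i; rewrite /evK /kconj_s /kconj.
by case: (i == 0)%N => //; case: (i < 2 ^ k)%N; rewrite ?evO ?ev0.
Qed.
Lemma evK_klo h x : evK (klo_s h x) = klo h (evK x).
Proof.
apply: functional_extensionality => i; rewrite /evK /klo_s /klo.
by case: (i < h)%N; rewrite ?ev0.
Qed.
Lemma evK_khi h x : evK (khi_s h x) = khi h (evK x).
Proof.
apply: functional_extensionality => i; rewrite /evK /khi_s /khi.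
by case: (i < h)%N; rewrite ?ev0.
Qed.


Local Open Scope nat_scope.
Lemma kmul_s_S k x y : kmul_s k.+1 x y =
  memoT (2 * 2 ^ k) (fun i => if (i < 2 ^ k)%N then
       sPs (kmul_s k (klo_s (2 ^ k) x) (klo_s (2 ^ k) y) i)
           (kmul_s k (khi_s (2 ^ k) y) (kconj_s k (khi_s (2 ^ k) x)) i)
     else if (i < 2 * 2 ^ k)%N then
       sPa (kmul_s k (kconj_s k (klo_s (2 ^ k) x)) (khi_s (2 ^ k) y) (i - 2 ^ k))
           (kmul_s k (klo_s (2 ^ k) y) (khi_s (2 ^ k) x) (i - 2 ^ k)) else sP0).
Proof. by []. Qed.

Lemma kmul_S k (x y : Kt R) i : kmul k.+1 x y i =
  if (i < 2 ^ k)%N then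
        (kmul k (klo (2 ^ k) x) (klo (2 ^ k) y) i - kmul k (khi (2 ^ k) y) (kconj k (khi (2 ^ k) x)) i)%R
      else if (i < (2 * 2 ^ k)%N)%N then
        (kmul k (kconj k (klo (2 ^ k) x)) (khi (2 ^ k) y) (i - 2 ^ k)%N + kmul k (klo (2 ^ k) y) (khi (2 ^ k) x) (i - 2 ^ k)%N)%R
      else 0%R.
Proof. by []. Qed.

Local Open Scope ring_scope.
Lemma kmul_ok k : forall x y, evK (kmul_s k x y) = kmul k (evK x) (evK y).
Proof.
elim: k => [|k IH] x y; apply: functional_extensionality => i.
  rewrite /evK /=; case: (i == 0)%N; by rewrite ?evM ?ev0.
have IH' a b j : ev l (kmul_s k a b j) = kmul k (evK a) (evK b) j by rewrite -IH.
rewrite /evK kmul_s_S memoT_id kmul_S.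
case: ifP => _; first by rewrite evS !IH' ?evK_kconj ?evK_klo ?evK_khi.
case: ifP => _; last by rewrite ev0.
by rewrite evA !IH' ?evK_kconj ?evK_klo ?evK_khi.
Qed.

Lemma kmo k x y t : ev l (kmul_s k x y t) = kmul k (evK x) (evK y) t.
Proof. by rewrite -kmul_ok. Qed.

Definition evMx (A : M3s) : M3 R := fun i j => evK (A i j).

Lemma mmul_ok k A B : evMx (mmul_s k A B) = mmul k (evMx A) (evMx B).
Proof.
apply: functional_extensionality => i; apply: functional_extensionality => j.
apply: functional_extensionality => t.
rewrite /evMx /evK /mmul_s memo3_id memoT_id !evA ev0 /mmul !big_ord_recr big_ord0 !kmo.
by [].
Qed.

Lemma ev_c1 b : (0 < b)%N -> ev l (sPc 1 b) = b%:R^-1.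
Proof. by move=> hb; rewrite evC // mulr1n mul1r. Qed.

Lemma jmul_ok k A B : evMx (jmul_s k A B) = jmul k (evMx A) (evMx B).
Proof.
apply: functional_extensionality => i; apply: functional_extensionality => j.
apply: functional_extensionality => t.
rewrite /jmul -!mmul_ok /evMx /evK /jmul_s memo3_id memoT_id evM evA ev_c1 //.
Qed.

Definition rv k (s : sV) : hK R k := locked (\row_(j < hdim k) ev l (s j)).
Lemma rvE k s : rv k s = \row_(j < hdim k) ev l (s j).
Proof. by rewrite /rv -lock. Qed.

Lemma vget_rv k s n : vget (rv k s) n = ev l (vg_s k s n).
Proof.
rewrite /vget /vg_s rvE; case: insubP => [j hn hj|hn].
  by rewrite hn mxE hj.
by rewrite (negbTE hn) ev0.
Qed.

Lemma evK_off k s p : evK (off_s k s p) =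
  fun t => if (t < 2 ^ k)%N then vget (rv k s) (3 + p * 2 ^ k + t)%N else 0.
Proof.
apply: functional_extensionality => t; rewrite /evK /off_s.
by case: ifP => _; rewrite ?vget_rv ?ev0.
Qed.

Lemma toM_ok k s : evMx (toM_s k s) = toM (rv k s).
Proof.
apply: functional_extensionality => i; apply: functional_extensionality => j.
rewrite /evMx /toM_s memo3_id /toM.
have E : ((i:nat) == j) = (i == j) by [].
rewrite E; case: (i == j).
  apply: functional_extensionality => t; rewrite /evK.
  by case: (t == 0)%N; rewrite ?vget_rv ?ev0.
case: ifP => _.
  by rewrite evK_off.
by rewrite evK_kconj evK_off.
Qed.

Lemma val_prow p : nat_of_ord (prow p) = prow_n p.
Proof. by rewrite /prow inordK //; case: ifP. Qed.
Lemma val_pcol p : nat_of_ord (pcol p) = pcol_n p.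
Proof. by rewrite /pcol inordK //; case: ifP. Qed.

Lemma fromM_ok k A : fromM k (evMx A) = rv k (fromM_s k A).
Proof.
rewrite rvE; apply/rowP => n; rewrite !mxE /fromM_s memoT_id.
case: ifP => hn.
  by rewrite /evMx /evK inordK.
by rewrite /evMx /evK val_prow val_pcol.
Qed.

Lemma jprod_ok k X Y : jprod (rv k X) (rv k Y) = rv k (jprod_s k X Y).
Proof. by rewrite /jprod -!toM_ok -jmul_ok fromM_ok. Qed.

Lemma mtr_ok A : mtr (evMx A) = ev l (mtr_s A).
Proof. by rewrite /mtr !big_ord_recr big_ord0 /mtr_s !evA ev0. Qed.

Lemma htr_ok k X : htr (rv k X) = ev l (htr_s k X).
Proof. by rewrite /htr -toM_ok mtr_ok. Qed.

Lemma hinner_ok k X Y : hinner (rv k X) (rv k Y) = ev l (hinner_s k X Y).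
Proof. by rewrite /hinner jprod_ok htr_ok. Qed.

Lemma rv_vadd k X Y : rv k (vadd X Y) = rv k X + rv k Y.
Proof. by rewrite !rvE; apply/rowP => n; rewrite !mxE evA. Qed.
Lemma rv_vsub k X Y : rv k (vsub X Y) = rv k X - rv k Y.
Proof. by rewrite !rvE; apply/rowP => n; rewrite !mxE evS. Qed.
Lemma rv_vscal k c X : rv k (vscal c X) = ev l c *: rv k X.
Proof. by rewrite !rvE; apply/rowP => n; rewrite !mxE evM. Qed.
Lemma rv_memo k n f : rv k (memoT n f) = rv k f.
Proof. by rewrite !rvE; apply/rowP => j; rewrite !mxE memoT_id. Qed.

Definition IvR k : hK R k := \row_(j < hdim k) (if (j < 3)%N then 1 else 0).
Lemma rv_Ivec k : rv k Ivec = IvR k.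
Proof. by rewrite !rvE; apply/rowP => n; rewrite !mxE /Ivec; case: ifP; rewrite ?ev1 ?ev0. Qed.

Definition halfR : R := 2%:R^-1.
Definition bformR k (X Y : hK R k) : hK R k :=
  jprod X Y - (htr X * halfR) *: Y - (htr Y * halfR) *: X
  + ((htr X * htr Y - hinner X Y) * halfR) *: IvR k.

Lemma bform_s_E k X Y : bform_s k X Y =
  memoT (hdim k) (vadd (vsub (vsub (jprod_s k X Y) (vscal (sPm (htr_s k X) shalf) Y))
    (vscal (sPm (htr_s k Y) shalf) X))
    (vscal (sPm (sPs (sPm (htr_s k X) (htr_s k Y)) (hinner_s k X Y)) shalf) Ivec)).
Proof. by []. Qed.

Lemma bform_ok k X Y : rv k (bform_s k X Y) = bformR (rv k X) (rv k Y).
Proof.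
rewrite bform_s_E rv_memo rv_vadd !rv_vsub !rv_vscal !evM evS evM rv_Ivec.
by rewrite -hinner_ok -!htr_ok -jprod_ok /shalf ev_c1.
Qed.

Lemma hdet_cong (a b c a' b' c' : R) : a = a' -> b = b' -> c = c' ->
  a / 3%:R - b * c / 2%:R + c ^+ 3 / 6%:R = a' / 3%:R - b' * c' / 2%:R + c' * (c' * c') / 6%:R.
Proof. by move=> -> -> ->; rewrite !exprS expr0 mulr1. Qed.

Lemma hdet_ok k X : hdet (rv k X) = ev l (hdet_s k X).
Proof.
rewrite /hdet /hdet_s evA evS !evM /shalf !ev_c1 //.
rewrite (jprod_ok k X X) (jprod_ok k X (jprod_s k X X)).
by apply: hdet_cong; apply: htr_ok.
Qed.

Lemma hN_ok k X Y Z : hN (rv k X) (rv k Y) (rv k Z) = ev l (hN_s k X Y Z).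
Proof.
have ev7 (p1 p2 p3 p4 p5 p6 p7 : Pl) :
  ev l (sPa (sPa (sPa (sPs (sPs (sPs p1 p2) p3) p4) p5) p6) p7) =
  ev l p1 - ev l p2 - ev l p3 - ev l p4 + ev l p5 + ev l p6 + ev l p7.
  by rewrite !evA !evS.
rewrite /hN /hN_s evM ev7 ev_c1 //.
have hc (a1 a2 a3 a4 a5 a6 a7 b1 b2 b3 b4 b5 b6 b7 : R) : a1 = b1 -> a2 = b2 -> a3 = b3 ->
  a4 = b4 -> a5 = b5 -> a6 = b6 -> a7 = b7 ->
  (a1 - a2 - a3 - a4 + a5 + a6 + a7) / 6%:R = (b1 - b2 - b3 - b4 + b5 + b6 + b7) * 6%:R^-1.
  by move=> -> -> -> -> -> -> ->.
apply: hc; rewrite -?rv_vadd; apply: hdet_ok.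
Qed.

End Model.

Section Main.
Variable R : realFieldType.

Lemma vget_ord k (X : hK R k) (j : 'I_(hdim k)) : vget X j = X 0 j.
Proof.
rewrite /vget; case: insubP => [j' _ hj|]; last by rewrite ltn_ord.
by congr (X 0 _); apply: val_inj.
Qed.

Definition coords k (X : hK R k) : seq R := mkseq (vget X) (hdim k).

Lemma nth_coords k (X : hK R k) rest n : (n < hdim k)%N ->
  nth 0 (coords X ++ rest) n = vget X n.
Proof. by move=> hn; rewrite nth_cat size_mkseq hn nth_mkseq. Qed.

Lemma nth_coords_shift k (X : hK R k) rest n :
  nth 0 (coords X ++ rest) (hdim k + n) = nth 0 rest n.
Proof. by rewrite nth_cat size_mkseq ltnNge leq_addr /= addKn. Qed.

Lemma rv_var (l : seq R) k off (X : hK R k) :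
  (forall n, (n < hdim k)%N -> nth 0 l (off + n) = vget X n) -> rv l k (varv off) = X.
Proof. by move=> H; apply/rowP => j; rewrite rvE mxE ev_var H ?ltn_ord // vget_ord. Qed.

Lemma rv_evec (l : seq R) k (a : 'I_(hdim k)) : rv l k (evec a) = delta_mx 0 a.
Proof.
apply/rowP => j; rewrite rvE !mxE /evec eqxx /=.
have -> : ((j : nat) == a) = (j == a) by [].
by case: (j == a); rewrite ?ev1 ?ev0.
Qed.

Lemma sumP_ok (l : seq R) n f : \sum_(i < n) ev l (f (i : nat)) = ev l (sumP n f).
Proof.
elim: n => [|n IH]; first by rewrite big_ord0 ev0.
by rewrite big_ord_recr /= IH evA.
Qed.

Lemma bullet_eq k (hk : check_spec k = true) (X Y : hK R k) : bullet X Y = bformR X Y.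
Proof.
move/andP: hk => [h1 h2].
pose sp (W : hK R k) := forall Z, hinner W Z = 3%:R * hN X Y Z.
have spB : sp (bformR X Y).
  move=> Z; pose l := coords X ++ coords Y ++ coords Z.
  have eX : rv l k (varv 0) = X by apply: rv_var => n hn; rewrite nth_coords.
  have eY : rv l k (varv (hdim k)) = Y.
    by apply: rv_var => n hn; rewrite /l nth_coords_shift nth_coords.
  have eZ : rv l k (varv (2 * hdim k)) = Z.
    apply: rv_var => n hn; rewrite /l mul2n -addnn -addnA nth_coords_shift.
    by rewrite nth_coords_shift -[coords Z]cats0 nth_coords.
  rewrite -eX -eY -eZ -bform_ok hinner_ok hN_ok (evPeq l h1) evM evC //.
  by rewrite mulr1n divr1.
have spb : sp (bullet X Y).
  rewrite /bullet; apply: (epsilon_spec (inhabits 0) sp); by exists (bformR X Y).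
have cE (W : hK R k) (j : 'I_(hdim k)) : hinner W (delta_mx 0 j) = (cq j)%:R * W 0 j.
  pose l := coords W.
  have eW : rv l k (varv 0) = W.
    by apply: rv_var => n hn; rewrite /l -[coords W]cats0 nth_coords.
  have hj : (j : nat) \in iota 0 (hdim k) by rewrite mem_iota /= ltn_ord.
  move/allP: h2 => /(_ _ hj) h3.
  rewrite -eW -(rv_evec l) hinner_ok (evPeq l h3) evM evC // ev_var.
  rewrite mulr1n divr1; congr (_ * _).
  by rewrite rvE mxE ev_var.
apply/rowP => j.
have hc : ((cq j)%:R : R) != 0 by rewrite pnatr_eq0 /cq; case: ifP.
apply: (mulfI hc).
by rewrite -!cE spb spB.
Qed.

End Main.

Lemma main_generic (R : realFieldType) (k : nat)
  (hs : check_spec k = true) (h1 : Peq Qeq_bool (lhs1 k) (rhs1 k) = true)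
  (h2 : Peq Qeq_bool (lhs2 k) (rhs2 k) = true)
  (X Y Z T : hK R k) :
  \tr (lin1_mx (bullet X \o bullet Y))
    = (2 ^ k + 2)%:R / 4%:R * hinner X Y /\
  \tr (lin1_mx (bullet X \o bullet Y \o bullet Z \o bullet T))
    = (2 ^ k + 2)%:R / 32%:R * (hinner X Y * hinner Z T + hinner X T * hinner Z Y)
      - (2 ^ k)%:R / 8%:R * hinner (bullet Y T) (bullet X Z).
Proof.
have bE : forall A B : hK R k, bullet A B = bformR A B by move=> A B; apply: bullet_eq.
have trE (F : hK R k -> hK R k) : \tr (lin1_mx F) = \sum_(i < hdim k) F (delta_mx 0 i) 0 i.
  by rewrite /mxtrace; apply: eq_bigr => i _; rewrite mxE.
pose n := hdim k.
pose l := coords X ++ coords Y ++ coords Z ++ coords T.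
have eX : rv l k (varv 0) = X by apply: rv_var => m hm; rewrite nth_coords.
have eY : rv l k (varv n) = Y.
  by apply: rv_var => m hm; rewrite /l nth_coords_shift nth_coords.
have eZ : rv l k (varv (2 * n)) = Z.
  apply: rv_var => m hm; rewrite /l (_ : (2 * n + m = n + (n + m))%N); last first.
    by rewrite mul2n -addnn addnA.
  by rewrite !nth_coords_shift nth_coords.
have eT : rv l k (varv (3 * n)) = T.
  apply: rv_var => m hm; rewrite /l (_ : (3 * n + m = n + (n + (n + m)))%N); last first.
    by rewrite !mulSn mul0n addn0 !addnA.
  by rewrite !nth_coords_shift -[coords T]cats0 nth_coords.
split.
  transitivity (ev l (lhs1 k)).
    rewrite /lhs1 -sumP_ok trE; apply: eq_bigr => i _ /=.
    rewrite !bE -(@rv_evec R l k i) -eX -eY.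
    rewrite -(@bform_ok R l k (varv n) (evec i)) -(@bform_ok R l k (varv 0)).
    by rewrite rvE mxE /n.
  rewrite (evPeq l h1) /rhs1 evM evC //; congr (_ * _).
  by rewrite -eX -eY hinner_ok.
transitivity (ev l (lhs2 k)).
  rewrite /lhs2 -sumP_ok trE; apply: eq_bigr => i _ /=.
  rewrite !bE -(@rv_evec R l k i) -eX -eY -eZ -eT.
  rewrite -(@bform_ok R l k (varv (3 * n)) (evec i)) -(@bform_ok R l k (varv (2 * n))).
  rewrite -(@bform_ok R l k (varv n)) -(@bform_ok R l k (varv 0)).
  by rewrite rvE mxE /n.
have evR (c1 c2 p1 p2 p3 p4 p5 : Pl) :
  ev l (sPs (sPm c1 (sPa (sPm p1 p2) (sPm p3 p4))) (sPm c2 p5)) =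
  ev l c1 * (ev l p1 * ev l p2 + ev l p3 * ev l p4) - ev l c2 * ev l p5.
  by rewrite evS !evM evA !evM.
rewrite (evPeq l h2) /rhs2 evR !evC // !bE.
rewrite -eX -eY -eZ -eT.
rewrite -(@bform_ok R l k (varv n) (varv (3 * n))) -(@bform_ok R l k (varv 0) (varv (2 * n))).
by rewrite !hinner_ok.
Qed.

Lemma chkS0 : check_spec 0 = true. Proof. vm_cast_no_check (erefl true). Qed.
Lemma chk1_0 : Peq Qeq_bool (lhs1 0) (rhs1 0) = true. Proof. vm_cast_no_check (erefl true). Qed.
Lemma chk2_0 : Peq Qeq_bool (lhs2 0) (rhs2 0) = true. Proof. vm_cast_no_check (erefl true). Qed.
Lemma chkS1 : check_spec 1 = true. Proof. vm_cast_no_check (erefl true). Qed.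
Lemma chk1_1 : Peq Qeq_bool (lhs1 1) (rhs1 1) = true. Proof. vm_cast_no_check (erefl true). Qed.
Lemma chk2_1 : Peq Qeq_bool (lhs2 1) (rhs2 1) = true. Proof. vm_cast_no_check (erefl true). Qed.
Lemma chkS2 : check_spec 2 = true. Proof. vm_cast_no_check (erefl true). Qed.
Lemma chk1_2 : Peq Qeq_bool (lhs1 2) (rhs1 2) = true. Proof. vm_cast_no_check (erefl true). Qed.
Lemma chk2_2 : Peq Qeq_bool (lhs2 2) (rhs2 2) = true. Proof. vm_cast_no_check (erefl true). Qed.
Lemma chkS3 : check_spec 3 = true. Proof. vm_cast_no_check (erefl true). Qed.
Lemma chk1_3 : Peq Qeq_bool (lhs1 3) (rhs1 3) = true. Proof. vm_cast_no_check (erefl true). Qed.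
Lemma chk2_3 : Peq Qeq_bool (lhs2 3) (rhs2 3) = true. Proof. vm_cast_no_check (erefl true). Qed.

Theorem mainTheorem6 (R : realFieldType) (k : nat) (hk : (k <= 3)%N)
    (X Y Z T : hK R k) :
  \tr (lin1_mx (bullet X \o bullet Y))
    = (2 ^ k + 2)%:R / 4%:R * hinner X Y /\
  \tr (lin1_mx (bullet X \o bullet Y \o bullet Z \o bullet T))
    = (2 ^ k + 2)%:R / 32%:R * (hinner X Y * hinner Z T + hinner X T * hinner Z Y)
      - (2 ^ k)%:R / 8%:R * hinner (bullet Y T) (bullet X Z).
Proof.
case: k hk X Y Z T => [|[|[|[|k]]]] // _.
- exact: (main_generic chkS0 chk1_0 chk2_0).
- exact: (main_generic chkS1 chk1_1 chk2_1).
- exact: (main_generic chkS2 chk1_2 chk2_2).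
- exact: (main_generic chkS3 chk1_3 chk2_3).
Qed.
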